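(* Let $\kappa\ge2$ be an integer, $\Delta>0$ and $a\in\mathbb R$. Then \[\sum_{m=-\infty}^{\infty}\frac1{((m+a)^2+\Delta^2)^{\kappa/2}}\le\frac{\kappa+\Delta}{\Delta}\int_{\mathbb R}\frac{dx}{(x^2+\Delta^2)^{\kappa/2}}.\] *)

(* Defs.v *)
From HB Require Import structures.
From mathcomp Require Import all_boot all_order all_algebra.
From mathcomp Require Import all_classical all_reals all_analysis.
Set Implicit Arguments. Unset Strict Implicit. Unset Printing Implicit Defensive.

(* Main.v *)
Require Import Defs.
From HB Require Import structures.
From mathcomp Require Import all_boot all_order all_algebra.
From mathcomp Require Import all_classical all_reals all_analysis.
From mathcomp Require Import ring lra zify measurable_realfun.
Import Order.TTheory GRing.Theory Num.Theory.
Local Open Scope classical_set_scope.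
Local Open Scope ring_scope.

Lemma disc_lemma (R : realType) (c : nat -> R) (M : R) :
  (forall k, c k < c k.+1 -> forall j, (j <= k)%N -> c j <= c k) ->
  (forall k, c k <= M) ->
  forall n, \sum_(k < n.+1) c k <= M + \sum_(k < n) Num.min (c k) (c k.+1).
Proof.
move=> uni cM n.
suff : \sum_(k < n.+1) c k - \sum_(k < n) Num.min (c k) (c k.+1) <= M /\
  ((forall j, (j <= n)%N -> c j <= c n) ->
   \sum_(k < n.+1) c k - \sum_(k < n) Num.min (c k) (c k.+1) <= c n).
  by case=> H _; lra.
elim: n => [|n [IH1 IH2]].
  rewrite big_ord_recr !big_ord0 /=; split=> [|_]; [have := cM 0%N|]; lra.
rewrite [X in X - _]big_ord_recr [X in _ - X]big_ord_recr /=.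
have [cle|clt] := leP (c n.+1) (c n).
  split; first lra.
  move=> Hj; have e : c n = c n.+1.
    by apply/le_anti; rewrite cle Hj.
  have : \sum_(k < n.+1) c k - \sum_(k < n) Num.min (c k) (c k.+1) <= c n.
    apply: IH2 => j jn; rewrite e; exact: Hj (leqW jn).
  lra.
have := IH2 (uni _ clt). have := cM n.+1. split; lra.
Qed.
Lemma itv_lemma (R : realType) (f : R -> R) (t : R) :
  (forall x, 0 <= f x) -> measurable_fun setT f ->
  (forall x y, `|x| <= `|y| -> f y <= f x) ->
  ((Num.min (f t) (f (t+1)))%:E <=
    \int[@lebesgue_measure R]_(x in `[t, (t+1)%R[) (f x)%:E)%E.
Proof.
move=> f0 mf fmon.
have mI : measurable (`[t, (t+1)%R[ : set R) by [].
apply: (@le_trans _ _ (\int[@lebesgue_measure R]_(x in `[t, (t+1)%R[)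
   (cst (Num.min (f t) (f (t+1)))%:E x))%E).
  rewrite integral_cst //.
  rewrite [X in (_ * X)%E](_ : _ = 1%E) ?mule1 //.
    apply: eq_trans; first exact: (lebesgue_measure_itv `[t, (t+1)%R[).
    rewrite /= lte_fin ltrDl ltr01.
    by rewrite -EFinD addrAC subrr add0r.
apply: ge0_le_integral => //.
- move=> x _ /=; rewrite lee_fin le_min !f0 //.
- apply/measurable_EFinP; exact: measurable_funTS.
move=> x; rewrite /= in_itv /= => /andP[tx xt].
rewrite lee_fin.
have [x0|x0] := leP 0 x.
  rewrite ge_min; apply/orP; right; apply: fmon.
  rewrite ger0_norm // ger0_norm; lra.
rewrite ge_min; apply/orP; left; apply: fmon.
rewrite ltr0_norm // ltr0_norm; lra.
Qed.

Lemma sum_itv_le (R : realType) (f : R -> R) (b : R) (n : nat) :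
  (forall x, 0 <= f x) -> measurable_fun setT f ->
  (\sum_(k < n) \int[@lebesgue_measure R]_(x in `[(k%:R + b)%R, (k%:R + b + 1)%R[) (f x)%:E
   <= \int[@lebesgue_measure R]_(x in [set: R]) (f x)%:E)%E.
Proof.
move=> f0 mf.
rewrite -(big_mkord xpredT (fun k => (\int[@lebesgue_measure R]_(x in `[(k%:R + b)%R, (k%:R + b + 1)%R[) (f x)%:E)%E)).
rewrite -ge0_integral_bigsetU //.
- apply: ge0_subset_integral => //.
  + by apply: bigsetU_measurable.
  + by apply/measurable_EFinP; exact: mf.
  + by move=> x _; rewrite lee_fin.
- exact: iota_uniq.
- move=> i j _ _ [x [/=]]; rewrite !in_itv /= => /andP[h1 h2] /andP[h3 h4].
  apply/eqP; rewrite eqn_leq; apply/andP; split.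
    rewrite -ltnS -(ltr_nat R) -natr1; lra.
  rewrite -ltnS -(ltr_nat R) -natr1; lra.
- apply/measurable_EFinP; exact: measurable_funTS.
- by move=> x _; rewrite lee_fin.
Qed.

Lemma esum_le (R : realType) (f : R -> R) (a : R) :
  (forall x, 0 <= f x) -> measurable_fun setT f ->
  (forall x y, `|x| <= `|y| -> f y <= f x) ->
  (\esum_(m in [set: int]) (f (m%:~R + a))%:E
   <= (f 0)%:E + \int[@lebesgue_measure R]_(x in [set: R]) (f x)%:E)%E.
Proof.
move=> f0 mf fmon.
apply: ub_ereal_sup => _ [A [finA _] <-].
pose N := (\max_(x <- (finmap.enum_fset (fset_set A))) absz x)%N.
have AN : forall x, A x -> (absz x <= N)%N.
  move=> x Ax; apply: leq_bigmax_seq => //.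
  by rewrite in_fset_set // inE.
pose h := fun k : nat => (k%:Z - N%:Z)%R.
pose B := h @` `I_(N + N).+1.
have finB : finite_set B by apply: finite_image; exact: finite_II.
apply: (@le_trans _ _ (\sum_(m \in B) (f (m%:~R + a))%:E)%E).
  apply: lee_fsum_nneg_subset => //.
  - move=> x; rewrite !inE => Ax.
    have := AN x Ax => xN.
    exists (absz (x + N%:Z)); rewrite /= ?/h; lia.
  - by move=> t _; rewrite lee_fin.
rewrite fsbig_image; last first.
  by move=> k k' _ _; rewrite /h; lia.
rewrite -fsbig_ord.
pose b := a - N%:R.
pose c := fun k : nat => f (k%:R + b).
have -> : (\sum_(k < (N + N).+1) (f ((h k)%:~R + a))%:E = \sum_(k < (N + N).+1) (c k)%:E)%E.
  apply: eq_bigr => k _; congr (EFin (f _)).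
  by rewrite /h /b intrD mulrNz; lra.
rewrite sumEFin.
apply: (@le_trans _ _ (f 0 + \sum_(k < N + N) Num.min (c k) (c k.+1))%:E).
  rewrite lee_fin; apply: disc_lemma.
  - move=> k ck j jk; rewrite /c in ck *.
    have H1 : `|k%:R + b + 1| < `|k%:R + b|.
      rewrite ltNge; apply/negP => H; move: (fmon _ _ H).
      have e : (k.+1%:R + b = k%:R + b + 1 :> R) by rewrite -natr1; lra.
      rewrite e in ck; lra.
    have H2 : k%:R + b < 0.
      rewrite ltNge; apply/negP => H.
      rewrite (ger0_norm H) ger0_norm in H1; last lra.
      lra.
    apply: fmon.
    have : (j%:R <= k%:R :> R) by rewrite ler_nat.
    move=> jk2; rewrite (ltr0_norm H2) ler0_norm; lra.
  - move=> k; apply: fmon; rewrite normr0; exact: normr_ge0.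
rewrite EFinD leeD2l // -sumEFin.
apply: (le_trans _ (@sum_itv_le R f b (N + N)%N f0 mf)).
apply: lee_sum => k _.
have := @itv_lemma R f (k%:R + b) f0 mf fmon.
have e : (k.+1%:R + b = k%:R + b + 1 :> R) by rewrite -natr1; lra.
by rewrite /c e.
Qed.

Lemma bern (R : realType) (u : R) (n : nat) :
  0 <= u -> 2 * n%:R * u <= 1 -> (1 + u) ^+ n <= 1 + 2 * n%:R * u.
Proof.
move=> u0; elim: n => [|n IH] h; first by rewrite expr0 mulr0n mulr0 mul0r addr0.
have h' : 2 * n%:R * u <= 1 by move: h; rewrite -natr1; nra.
have := IH h'; rewrite exprSr => H.
have hx : 0 <= (1 + u) ^+ n by apply: exprn_ge0; lra.
have n0 : 0 <= n%:R :> R by [].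
apply: (@le_trans _ _ ((1 + 2 * n%:R * u) * (1 + u))).
  apply: ler_wpM2r => //; lra.
move: h; rewrite -natr1; nra.
Qed.

Theorem lemmaB2 (R : realType) (kappa : nat) (Delta a : R)
  (hk : (2 <= kappa)%N) (hD : 0 < Delta) :
  (\esum_(m in [set: int])
      ((((m%:~R + a) ^+ 2 + Delta ^+ 2) `^ (kappa%:R / 2))^-1)%:E
   <= ((kappa%:R + Delta) / Delta)%:E *
      \int[@lebesgue_measure R]_(x in [set: R])
        (((x ^+ 2 + Delta ^+ 2) `^ (kappa%:R / 2))^-1)%:E)%E.
Proof.
set p := kappa%:R / 2.
set f := fun x : R => ((x ^+ 2 + Delta ^+ 2) `^ p)^-1.
have e2 : (2 <= kappa%:R :> R) by rewrite (ler_nat R 2).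
have p0 : 0 <= p by rewrite /p; lra.
have hpos : forall x : R, 0 < (x ^+ 2 + Delta ^+ 2) `^ p.
  move=> x; apply: powR_gt0; have := sqr_ge0 x; nra.
have f0 : forall x, 0 <= f x by move=> x; rewrite /f invr_ge0 ltW.
have mf : measurable_fun setT f.
  have -> : f = (fun x => (x ^+ 2 + Delta ^+ 2) `^ (- p)).
    by apply: funext => x; rewrite /f powRN.
  apply: (measurableT_comp (measurable_powR _)) => //.
  apply: measurable_funD => //; exact: measurable_funX.
have fmon : forall x y, `|x| <= `|y| -> f y <= f x.
  move=> x y xy; rewrite /f lef_pV2 ?posrE ?hpos //.
  apply: ge0_ler_powR => //; rewrite ?nnegrE.
  - have := sqr_ge0 x; nra.
  - have := sqr_ge0 y; nra.
  rewrite lerD2r -(real_normK (num_real x)) -(real_normK (num_real y)).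
  have := normr_ge0 x; nra.
have H1 := @esum_le R f a f0 mf fmon.
apply: (le_trans H1).
set I := (\int[@lebesgue_measure R]_(x in [set: R]) (f x)%:E)%E.
have I0 : (0 <= I)%E by apply: integral_ge0 => x _; rewrite lee_fin.
have -> : (kappa%:R + Delta) / Delta = kappa%:R / Delta + 1.
  by field; lra.
rewrite EFinD ge0_muleDl ?lee_fin ?divr_ge0 //; last lra.
rewrite mul1e leeD2r //.
set eps := Delta / kappa%:R.
have eps0 : 0 < eps by rewrite /eps divr_gt0 //; lra.
have key : forall x, `|x| <= eps -> f 0 / 2 <= f x.
  move=> x hx.
  have hD2 : 0 < Delta ^+ 2 by apply: exprn_gt0.
  set u := x ^+ 2 / Delta ^+ 2.
  have u0 : 0 <= u by rewrite /u divr_ge0 // sqr_ge0.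
  have ex : x ^+ 2 + Delta ^+ 2 = (1 + u) * Delta ^+ 2.
    by rewrite /u; field; lra.
  have uD : u * Delta ^+ 2 = x ^+ 2 by rewrite /u; field; lra.
  have epsk : eps * kappa%:R = Delta by rewrite /eps; field; lra.
  have x2 : x ^+ 2 <= eps ^+ 2.
    rewrite -(real_normK (num_real x)); have := normr_ge0 x; nra.
  have uk : u * kappa%:R ^+ 2 <= 1.
    have : u * kappa%:R ^+ 2 * Delta ^+ 2 <= Delta ^+ 2.
      rewrite -mulrA (mulrC (_ ^+ 2)) mulrA uD -epsk; nra.
    nra.
  have h2 : 2 * kappa%:R * u <= 1 by nra.
  have hx2 : (x ^+ 2 + Delta ^+ 2) `^ p <= 2 * (0 ^+ 2 + Delta ^+ 2) `^ p.
    have -> : (0:R) ^+ 2 = 0 by rewrite expr2 mul0r.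
    have u1 : 0 <= 1 + u by lra.
    rewrite ex add0r powRM //; last exact: ltW.
    apply: ler_wpM2r; first exact: powR_ge0.
    apply: (@le_trans _ _ ((1 + u) `^ kappa%:R)).
      apply: ler_powR; first lra.
      rewrite /p; lra.
    rewrite powR_mulrn //.
    apply: (le_trans (@bern R u kappa u0 h2)).
    nra.
  have ei : forall y : R, 0 < y -> y^-1 / 2 = (2 * y)^-1.
    by move=> y y0; field; lra.
  rewrite /f ei // lef_pV2 ?posrE ?hpos //.
  apply: mulr_gt0 => //.
have mI : measurable (`[(- eps)%R, eps]%classic : set R) by [].
have Hlow : ((f 0 / 2 * (2 * eps))%:E <= I)%E.
  apply: (@le_trans _ _ (\int[@lebesgue_measure R]_(x in `[(- eps)%R, eps]) (f x)%:E)%E); last first.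
    apply: ge0_subset_integral => //.
    - by apply/measurable_EFinP.
    - by move=> x _; rewrite lee_fin.
  apply: (@le_trans _ _ (\int[@lebesgue_measure R]_(x in `[(- eps)%R, eps])
     (cst (f 0 / 2)%:E x))%E).
    rewrite integral_cst //.
    rewrite [X in (_ * X)%E](_ : _ = (2 * eps)%:E) ?EFinM //.
    apply: eq_trans; first exact: (lebesgue_measure_itv `[(- eps)%R, eps]).
    rewrite /= lte_fin; have -> : - eps < eps by lra.
    by rewrite -EFinD; congr EFin; rewrite /eps; ring.
  apply: ge0_le_integral => //.
  - by move=> x _ /=; rewrite lee_fin divr_ge0.
  - by apply/measurable_EFinP; exact: measurable_funTS.
  move=> x; rewrite /= in_itv /= => /andP[h1 h2].
  by rewrite lee_fin; apply: key; rewrite ler_norml; apply/andP.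
apply: (le_trans _ (lee_wpmul2l _ Hlow)); last by rewrite lee_fin divr_ge0 //; lra.
rewrite -EFinM lee_fin /eps.
have k0 : (0 < kappa%:R :> R) by lra.
rewrite le_eqVlt; apply/orP; left; apply/eqP; field; lra.
Qed.
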